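(* Let $G$ be a locally compact abelian group, $K$ a compact subgroup, and $\Omega$ an open subgroup containing $K$. Consider the continuous map $$\Phi:\mathcal{S}(G)\to\mathcal{S}(\Omega)\times\mathcal{S}(G/K),\qquad H\mapsto\big(H\cap\Omega,\ (H+K)/K\big).$$ Let $R\in\mathcal{S}(\Omega)$ and let $M$ be a closed subgroup of $G$ containing $K$. Then the fiber $\Phi^{-1}(R,M/K)$ is either empty or homeomorphic to the compact group $\mathrm{Hom}\big((M+\Omega)/\Omega,\ K/(K\cap R)\big)$ (with the topology of pointwise convergence); in particular it is homogeneous.
   Context: $\mathcal{S}(X)$ denotes the space of closed subgroups of a locally compact group $X$ with the Chabauty topology (basic open sets $\{F: F\cap K'=\emptyset,\ F\cap U_i\ne\emptyset\ \forall i\}$, $K'$ compact, $U_i$ open). Homomorphisms are continuous; $(M+\Omega)/\Omega$ is discrete. *)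

(* Defs.v *)
From mathcomp Require Import all_boot all_order all_algebra.
From mathcomp Require Import all_classical all_reals all_analysis.
Set Implicit Arguments. Unset Strict Implicit. Unset Printing Implicit Defensive.
Import Order.TTheory GRing.Theory Num.Theory.
Local Open Scope classical_set_scope.
Local Open Scope ring_scope.

Section Defs.
Variable G : topologicalZmodType.

Definition is_subgroup (H : set G) : Prop :=
  H 0 /\ (forall x y, H x -> H y -> H (x - y)).

Definition closed_subgroup (H : set G) : Prop := is_subgroup H /\ closed H.

Definition SG : set (set G) := [set H | closed_subgroup H].

Definition setadd (A B : set G) : set G := [set a + b | a in A & b in B].

Definition coset (H : set G) (x : G) : set G := [set x + h | h in H].

(* (image of A in) G/H, cosets represented as subsets of G:  A/H = {a + H | a in A} *)
Definition quot (A H : set G) : set (set G) := [set coset H a | a in A].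

Definition fiber (K Om R M : set G) : set (set G) :=
  [set H | SG H /\ H `&` Om = R /\ quot (setadd H K) K = quot M K].
End Defs.

Section Top.
Variable A : Type.
Definition is_topology (T : set (set A)) : Prop :=
  T setT /\ (forall U V, T U -> T V -> T (U `&` V)) /\
  (forall F : set (set A), F `<=` T -> T (\bigcup_(U in F) U)).

Definition gen_open (S : set (set A)) : set (set A) :=
  [set U | forall T, is_topology T -> S `<=` T -> T U].
End Top.

Definition homeomorphic_sub (A B : Type) (opA : set (set A)) (X : set A)
  (opB : set (set B)) (Y : set B) : Prop :=
  exists (f : A -> B) (g : B -> A),
    (forall x, X x -> Y (f x)) /\ (forall y, Y y -> X (g y)) /\
    (forall x, X x -> g (f x) = x) /\ (forall y, Y y -> f (g y) = y) /\
    (forall V, opB V -> exists U, opA U /\ X `&` f @^-1` V = X `&` U) /\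
    (forall U, opA U -> exists V, opB V /\ Y `&` g @^-1` U = Y `&` V).

Section Spaces.
Variable G : topologicalZmodType.

(* Chabauty topology on subsets of G (subbasis); its trace on S(G) is the
   Chabauty topology of S(G) *)
Definition chabauty_subbasis : set (set (set G)) :=
  [set W | (exists C : set G, compact C /\ W = [set F | F `&` C = set0]) \/
           (exists U : set G, open U /\ W = [set F | F `&` U !=set0])].
Definition chabauty_open : set (set (set G)) := gen_open chabauty_subbasis.

Definition quot_open (K L : set G) : set (set (set G)) :=
  [set U | U `<=` quot K L /\
     exists V : set G, open V /\ [set k | K k /\ U (coset L k)] = K `&` V].

(* Hom(D, C) for D = (M+Om)/Om and C = K/(K ∩ R): group homomorphisms
   (automatically continuous since D is discrete), represented by maps on cosets,
   normalised to be set0 outside D *)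
Definition Hom_quot (M Om K R : set G) : set (set G -> set G) :=
  let D := quot (setadd M Om) Om in
  let C := quot K (K `&` R) in
  [set f | (forall X, D X -> C (f X)) /\
           (forall X Y, D X -> D Y -> f (setadd X Y) = setadd (f X) (f Y)) /\
           (forall X, ~ D X -> f X = set0)].

Definition pointwise_open (M Om K R : set G) : set (set (set G -> set G)) :=
  gen_open [set W | exists d U, quot (setadd M Om) Om d /\
                       quot_open K (K `&` R) U /\ W = [set f | U (f d)]].
End Spaces.

(* Main.v *)
Require Import Defs.
From mathcomp Require Import all_boot all_order all_algebra.
From mathcomp Require Import all_classical all_reals all_analysis.
Set Implicit Arguments. Unset Strict Implicit. Unset Printing Implicit Defensive.
Import Order.TTheory GRing.Theory Num.Theory.
Local Open Scope classical_set_scope.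
Local Open Scope ring_scope.

Section Alg.
Variable G : topologicalZmodType.
Implicit Types (H : set G) (x y a b : G).

Lemma sg0 H : is_subgroup H -> H 0. Proof. by case. Qed.
Lemma sgB H x y : is_subgroup H -> H x -> H y -> H (x - y).
Proof. by case=> _; apply. Qed.
Lemma sgN H x : is_subgroup H -> H x -> H (- x).
Proof. by move=> sH Hx; rewrite -sub0r; apply: sgB => //; apply: sg0. Qed.
Lemma sgD H x y : is_subgroup H -> H x -> H y -> H (x + y).
Proof. by move=> sH Hx Hy; rewrite -[y]opprK; apply: sgB => //; apply: sgN. Qed.
Lemma sgI H1 H2 : is_subgroup H1 -> is_subgroup H2 -> is_subgroup (H1 `&` H2).
Proof.
move=> s1 s2; split; first by split; apply: sg0.
by move=> x y [? ?] [? ?]; split; apply: sgB.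
Qed.

Lemma cosetP H a x : is_subgroup H -> coset H a x <-> H (x - a).
Proof.
move=> sH; split; first by case=> h Hh <-; rewrite addrC addKr.
by move=> Hx; exists (x - a) => //; rewrite addrC subrK.
Qed.

Lemma coset_eq H a b : is_subgroup H -> H (a - b) -> coset H a = coset H b.
Proof.
move=> sH Hab; apply/seteqP; split=> x /(cosetP _ _ sH) Hx; apply/(cosetP _ _ sH).
  by have := sgD sH Hx Hab; rewrite addrA subrK.
by have := sgB sH Hx Hab; rewrite opprB addrA subrK.
Qed.

Lemma coset_eqP H a b : is_subgroup H -> coset H a = coset H b -> H (a - b).
Proof.
move=> sH e; have : coset H a a by apply/(cosetP _ _ sH); rewrite subrr; apply: sg0.
by rewrite e => /(cosetP _ _ sH).
Qed.

Lemma coset_self H x : is_subgroup H -> coset H x x.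
Proof. by move=> sH; apply/(cosetP _ _ sH); rewrite subrr; apply: sg0. Qed.

Lemma coset_of_mem H a x : is_subgroup H -> coset H a x -> coset H a = coset H x.
Proof.
move=> sH /(cosetP _ _ sH) h; apply: coset_eq => //.
by rewrite -opprB; apply: sgN.
Qed.

Lemma setadd_coset H a b : is_subgroup H ->
  setadd (coset H a) (coset H b) = coset H (a + b).
Proof.
move=> sH; apply/seteqP; split.
  move=> _ [_ [h1 H1 <-] [_ [h2 H2 <-] <-]].
  by exists (h1 + h2); [apply: sgD | rewrite addrACA].
move=> _ [h Hh <-]; exists (a + h); first by exists h.
by exists b; [apply: coset_self | rewrite addrAC].
Qed.

Lemma coset0 H : is_subgroup H -> coset H 0 = H.
Proof.
move=> sH; apply/seteqP; split; first by move=> _ [h Hh <-]; rewrite add0r.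
by move=> h Hh; exists h => //; rewrite add0r.
Qed.

Lemma setadd_sg H1 H2 : is_subgroup H1 -> is_subgroup H2 -> is_subgroup (setadd H1 H2).
Proof.
move=> s1 s2; split; first by exists 0; [apply: sg0|exists 0; [apply: sg0|rewrite addr0]].
move=> _ _ [a1 A1 [b1 B1 <-]] [a2 A2 [b2 B2 <-]].
exists (a1 - a2); first by apply: sgB.
by exists (b1 - b2); [apply: sgB | rewrite opprD addrACA].
Qed.

End Alg.

Inductive aterm := AV of nat | AZ | AN of aterm | AA of aterm & aterm.

Section Abel.
Variable V : zmodType.

Fixpoint aeval (e : seq V) t := match t with
  | AV i => nth 0 e i | AZ => 0 | AN t => - aeval e t
  | AA a b => aeval e a + aeval e b end.

Fixpoint addl (l1 l2 : seq int) : seq int := match l1, l2 with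
  | [::], l => l | l, [::] => l | a :: l1, b :: l2 => (a + b) :: addl l1 l2 end.

Fixpoint nf t : seq int := match t with
  | AV i => ncons i 0 [:: 1] | AZ => [::] | AN t => map -%R (nf t)
  | AA a b => addl (nf a) (nf b) end.

Fixpoint evall (e : seq V) (l : seq int) : V := match l with
  | [::] => 0 | c :: l => (head 0 e) *~ c + evall (behead e) l end.

Lemma evall_add e l1 l2 : evall e (addl l1 l2) = evall e l1 + evall e l2.
Proof.
elim: l1 l2 e => [|a l1 IH] [|b l2] e /=; rewrite ?add0r ?addr0 //.
by rewrite IH mulrzDr addrACA.
Qed.

Lemma evall_opp e l : evall e (map -%R l) = - evall e l.
Proof. by elim: l e => [|a l IH] e /=; rewrite ?oppr0 // IH opprD mulrNz. Qed.

Lemma evall_var e i : evall e (ncons i 0 [:: 1]) = nth 0 e i.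
Proof.
elim: i e => [|i IH] [|x e] /=; rewrite ?mulr0z ?add0r ?addr0 ?IH //.
by case: i {IH}.
Qed.

Lemma aeval_nf e t : aeval e t = evall e (nf t).
Proof.
elim: t => [i||t IH|a IHa b IHb] /=.
- by rewrite evall_var.
- by [].
- by rewrite evall_opp IH.
- by rewrite evall_add IHa IHb.
Qed.

Lemma evall0 e l : all (fun c => c == 0) l -> evall e l = 0.
Proof.
elim: l e => [|c l IH] e //= /andP[/eqP -> h]; by rewrite mulr0z add0r IH.
Qed.

Lemma abel_sound e t1 t2 :
  all (fun c => c == 0) (nf (AA t1 (AN t2))) -> aeval e t1 = aeval e t2.
Proof.
move=> h; apply/eqP; rewrite -subr_eq0; apply/eqP.
by have := evall0 e h; rewrite -aeval_nf.
Qed.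
End Abel.

Ltac abel_find x env :=
  lazymatch env with
  | x :: _ => constr:(0%N)
  | _ :: ?e => let n := abel_find x e in constr:(n.+1)
  end.

Ltac abel_atoms t env :=
  lazymatch t with
  | (?a + ?b)%R => let e := abel_atoms a env in abel_atoms b e
  | (- ?a)%R => abel_atoms a env
  | 0%R => env
  | _ => match env with
         | _ => let _ := abel_find t env in env
         | _ => constr:(t :: env)
         end
  end.

Ltac abel_reify t env :=
  lazymatch t with
  | (?a + ?b)%R => let x := abel_reify a env in let y := abel_reify b env in constr:(AA x y)
  | (- ?a)%R => let x := abel_reify a env in constr:(AN x)
  | 0%R => constr:(AZ)
  | _ => let n := abel_find t env in constr:(AV n)
  end.

Ltac abel :=
  lazymatch goal with
  | |- @eq ?T ?l ?r =>
    let e0 := constr:(@nil T) in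
    let e1 := abel_atoms l e0 in
    let e := abel_atoms r e1 in
    let tl := abel_reify l e in
    let tr := abel_reify r e in
    change (aeval e tl = aeval e tr); apply: abel_sound; vm_compute; reflexivity
  end.


Section GenTop.
Variable A : Type.

Lemma gen_open_top (SB : set (set A)) : is_topology (gen_open SB).
Proof.
split; [|split].
- by move=> T [? _] _.
- by move=> U V gU gV T tT sT; case: (tT) => _ [hI _]; apply: hI; [apply: gU|apply: gV].
- move=> F sF T tT sT; case: (tT) => _ [_ hU]; apply: hU => U FU.
  exact: sF FU T tT sT.
Qed.

Lemma gen_open_sub (SB : set (set A)) : SB `<=` gen_open SB.
Proof. by move=> U SU T _ sT; apply: sT. Qed.

Lemma top_setT (T : set (set A)) : is_topology T -> T setT.
Proof. by case. Qed.

Lemma top_bigcup (T : set (set A)) F : is_topology T -> F `<=` T -> T (\bigcup_(U in F) U).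
Proof. by case=> _ [_ h]; apply: h. Qed.
End GenTop.

Lemma cont_gen (A B : Type) (opA : set (set A)) (X : set A) (SB : set (set B)) (f : A -> B) :
  is_topology opA ->
  (forall V, SB V -> exists U, opA U /\ X `&` f @^-1` V = X `&` U) ->
  forall V, gen_open SB V -> exists U, opA U /\ X `&` f @^-1` V = X `&` U.
Proof.
move=> tA hSB V gV.
apply: (gV [set V | exists U, opA U /\ X `&` f @^-1` V = X `&` U]); last exact: hSB.
split; [|split].
- by exists setT; split; [exact: top_setT|rewrite !setIT].
- move=> U V' [U1 [op1 e1]] [U2 [op2 e2]]; exists (U1 `&` U2); split.
    by case: tA => _ [h _]; apply: h.
  by rewrite preimage_setI -{1}(setIid X) setIACA e1 e2 setIACA setIid.
- move=> F sF; exists (\bigcup_(U in [set U | opA U /\ exists V', F V' /\ X `&` f @^-1` V' = X `&` U]) U).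
  split; first by apply: top_bigcup => // U [].
  apply/seteqP; split.
    move=> a [Xa [V' FV' V'a]]; split => //.
    have [U [oU eU]] := sF V' FV'.
    have : (X `&` U) a by rewrite -eU.
    by case=> _ Ua; exists U => //; split => //; exists V'.
  move=> a [Xa [U [oU [V' [FV' eU]]] Ua]]; split => //.
  have : (X `&` f @^-1` V') a by rewrite eU.
  by case=> _ fa; exists V'.
Qed.

Lemma local_open (A B : Type) (opA : set (set A)) (X : set A) (W : set B) (f : A -> B) :
  is_topology opA ->
  (forall a, X a -> W (f a) -> exists U, opA U /\ U a /\ forall a', X a' -> U a' -> W (f a')) ->
  exists U, opA U /\ X `&` f @^-1` W = X `&` U.
Proof.
move=> tA h.
exists (\bigcup_(U in [set U | opA U /\ forall a', X a' -> U a' -> W (f a')]) U).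
split; first by apply: top_bigcup => // U [].
apply/seteqP; split.
  move=> a [Xa Wa]; split => //; have [U [oU [Ua hU]]] := h a Xa Wa.
  by exists U.
by move=> a [Xa [U [oU hU] Ua]]; split => //; apply: hU.
Qed.

Section TopG.
Variable G : topologicalZmodType.

Lemma trans_cont (a : G) : continuous (fun x : G => x + a).
Proof.
move=> x; apply: (@continuous_comp _ _ _ (fun x : G => (x, a)) (fun x : G * G => x.1 + x.2)).
  by apply: cvg_pair; [exact: cvg_id | exact: cvg_cst].
exact: add_continuous.
Qed.

Lemma open_trans (U : set G) (a : G) : open U -> open [set x | U (x + a)].
Proof.
move=> oU; have -> : [set x | U (x + a)] = (fun x => x + a) @^-1` U by [].
by apply: open_comp => // x _; apply: trans_cont.
Qed.

Lemma open_local (A : set G) :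
  (forall x, A x -> exists V, open V /\ V x /\ V `<=` A) -> open A.
Proof.
move=> h; rewrite openE => x Ax; have [V [oV [Vx VA]]] := h x Ax.
rewrite /interior; apply: filterS VA _; apply: open_nbhs_nbhs; by split.
Qed.

Lemma open_coset (H : set G) a : is_subgroup H -> open H -> open (coset H a).
Proof.
move=> sH oH; have -> : coset H a = [set x | H (x + - a)].
  by apply/seteqP; split => x /=; [move/(cosetP _ _ sH)|move=> h; apply/(cosetP _ _ sH)].
exact: open_trans.
Qed.

Lemma open_sg_closed (H : set G) : is_subgroup H -> open H -> closed H.
Proof.
move=> sH oH; rewrite -openC; apply: open_local => x nHx.
exists (coset H x); split; first exact: open_coset.
split; first exact: coset_self.
move=> y /(cosetP _ _ sH) Hyx Hy; apply: nHx.
by have := sgB sH Hy Hyx; rewrite opprB addrC subrK.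
Qed.

Lemma open_setadd_sg (H O : set G) : is_subgroup H -> is_subgroup O -> open O ->
  open (setadd H O).
Proof.
move=> sH sO oO; apply: open_local => x Sx; exists (coset O x); split; first exact: open_coset.
split; first exact: coset_self.
move=> y /(cosetP _ _ sO) Oyx; case: Sx => h Hh [w Ow ex]; rewrite -ex in Oyx.
exists h => //.
exists (w + (y - (h + w))); first exact: (sgD sO).
by rewrite addrA subrKC.
Qed.
End TopG.

Section Main.
Variable G : topologicalZmodType.
Variables K Om R M H0 : set G.
Hypothesis sK : is_subgroup K.
Hypothesis sOm : is_subgroup Om.
Hypothesis KOm : K `<=` Om.
Hypothesis sR : is_subgroup R.
Hypothesis ROm : R `<=` Om.
Hypothesis sM : is_subgroup M.
Hypothesis KM : K `<=` M.
Hypothesis fH0 : fiber K Om R M H0.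

Let S := setadd M Om.
Let D := quot S Om.
Let L := K `&` R.
Let sS : is_subgroup S. Proof. exact: setadd_sg. Qed.
Let sL : is_subgroup L. Proof. exact: sgI. Qed.

Lemma fiber_sum H : fiber K Om R M H -> setadd H K = M.
Proof.
case=> [[sH _] [_ eq]]; apply/seteqP; split.
  move=> x Hx; have : quot (setadd H K) K (coset K x) by exists x.
  rewrite eq => -[m Mm /(coset_eqP sK) Kmx].
  by have := sgB sM Mm (KM Kmx); rewrite opprB addrC subrK.
move=> m Mm; have : quot M K (coset K m) by exists m.
rewrite -eq => -[_ [h Hh [k Kk <-]] /(coset_eqP sK) Kx].
exists h => //; exists (k - (h + k - m)); first exact: sgB sK Kk Kx.
by rewrite opprB addrA subrKC.
Qed.

Lemma fiber_sg H : fiber K Om R M H -> is_subgroup H.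
Proof. by case=> [[]]. Qed.

Lemma fiberR H x : fiber K Om R M H -> H x -> Om x -> R x.
Proof. by case=> _ [e _] Hx Ox; rewrite -e. Qed.

Lemma fiberRH H x : fiber K Om R M H -> R x -> H x.
Proof. by case=> _ [e _] Rx; move: Rx; rewrite -e => -[]. Qed.

Lemma fiberM H x : fiber K Om R M H -> H x -> M x.
Proof.
move=> fH Hx; rewrite -(fiber_sum fH); exists x => //; exists 0.
  exact: sg0. by rewrite addr0.
Qed.

Lemma S_M x : M x -> S x.
Proof. by move=> Mx; exists x => //; exists 0; [exact: sg0| rewrite addr0]. Qed.

Lemma S_O x : Om x -> S x.
Proof. by move=> Ox; exists 0; [exact: sg0| exists x => //; rewrite add0r]. Qed.

Lemma D_coset x : S x -> D (coset Om x).
Proof. by move=> Sx; exists x. Qed.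

Lemma D_mem X x : D X -> X x -> S x /\ X = coset Om x.
Proof.
case=> a Sa <- Xx; split; last exact: coset_of_mem.
move: Xx => /(cosetP _ _ sOm) Oxa.
by have := sgD sS Sa (S_O Oxa); rewrite addrC subrK.
Qed.

Lemma D_Om : D Om.
Proof. by rewrite -(coset0 sOm); apply: D_coset; apply: S_M; apply: sg0. Qed.

Lemma D_add X Y : D X -> D Y -> D (setadd X Y).
Proof.
case=> a Sa <- [b Sb <-]; rewrite setadd_coset //; apply: D_coset.
exact: sgD.
Qed.

Lemma D_Om_diff X x y : D X -> X x -> X y -> Om (x - y).
Proof.
move=> DX Xx Xy; have [_ e] := D_mem DX Xx.
by move: Xy; rewrite e => /(cosetP _ _ sOm) h; rewrite -opprB; apply: sgN.
Qed.

Definition pt X := xget 0 (H0 `&` X).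

Lemma pt_spec X : D X -> H0 (pt X) /\ X (pt X).
Proof.
move=> DX; apply: (@xgetPex _ 0 (H0 `&` X)); case: DX => a [m Mm [w Ow ea]] eX; subst a X.
rewrite -(fiber_sum fH0) in Mm; case: Mm => h Hh [k Kk ek].
exists h; split => //; apply/(cosetP _ _ sOm).
have -> : h - (m + w) = - (k + w) by rewrite -ek -addrA opprD addNKr.
by apply: (sgN sOm); apply: (sgD sOm) => //; apply: KOm.
Qed.


Lemma pt_R X : D X -> Om (pt X) -> R (pt X).
Proof. by move=> DX Op; apply: (fiberR fH0) => //; case: (pt_spec DX). Qed.

Lemma D_addOm X a b : D X -> X a -> Om b -> X (a + b).
Proof.
move=> DX Xa Ob; have [_ e] := D_mem DX Xa; rewrite e; apply/(cosetP _ _ sOm).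
by rewrite addrAC subrr add0r.
Qed.


Lemma cosetL_K c x : K c -> coset L c x -> K x.
Proof. by move=> Kc [l [Kl _] <-]; apply: (sgD sK). Qed.

Lemma coset_diff (H : set G) c x y : is_subgroup H -> coset H c x -> coset H c y -> H (x - y).
Proof.
move=> sH /(cosetP _ _ sH) hx /(cosetP _ _ sH) hy.
have := sgB sH hx hy; by rewrite opprB addrA subrK.
Qed.

Definition Psi (H : set G) (X : set G) : set G := [set k | D X /\ K k /\ H (pt X + k)].
Definition Theta (f : set G -> set G) : set G :=
  [set x | exists X, D X /\ exists2 k, f X k & R (x - (pt X + k))].
Let Hom := Hom_quot M Om K R.

Lemma psi_ex H X : fiber K Om R M H -> D X -> exists2 k0, K k0 & H (pt X + k0).
Proof.
move=> fH DX; have [hp _] := pt_spec DX.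
have := fiberM fH0 hp; rewrite -(fiber_sum fH) => -[h Hh [k1 Kk1 e]].
exists (- k1); first exact: (sgN sK).
by rewrite -e addrK.
Qed.

Lemma psi_coset_of H X k0 : fiber K Om R M H -> D X -> K k0 -> H (pt X + k0) ->
  Psi H X = coset L k0.
Proof.
move=> fH DX Kk0 Hk0; have sH := fiber_sg fH; apply/seteqP; split.
  move=> k [_ [Kk Hk]]; apply/(cosetP _ _ sL).
  have Kd : K (k - k0) by apply: (sgB sK).
  split => //; apply: (fiberR fH); last exact: KOm.
  have := sgB sH Hk Hk0; by rewrite opprD addrACA subrr add0r.
move=> k /(cosetP _ _ sL) [Kd Rd]; split => //; split.
  by have := sgD sK Kd Kk0; rewrite subrK.
have := sgD sH (fiberRH fH Rd) Hk0; by rewrite addrCA subrK.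
Qed.

Lemma Psi_Hom H : fiber K Om R M H -> Hom (Psi H).
Proof.
move=> fH; split; [|split].
- move=> X DX; have [k0 Kk0 Hk0] := psi_ex fH DX.
  by exists k0 => //; rewrite (psi_coset_of fH DX Kk0 Hk0).
- move=> X Y DX DY; have sH := fiber_sg fH.
  have [k1 Kk1 Hk1] := psi_ex fH DX; have [k2 Kk2 Hk2] := psi_ex fH DY.
  rewrite (psi_coset_of fH DX Kk1 Hk1) (psi_coset_of fH DY Kk2 Hk2) setadd_coset //.
  have DZ := D_add DX DY.
  apply: psi_coset_of => //; first exact: (sgD sK).
  have [pXH pXX] := pt_spec DX; have [pYH pYY] := pt_spec DY; have [pZH pZZ] := pt_spec DZ.
  have Zs : setadd X Y (pt X + pt Y) by exists (pt X) => //; exists (pt Y).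
  have Rd : R (pt (setadd X Y) - (pt X + pt Y)).
    apply: (fiberR fH0); first by apply: (sgB (fiber_sg fH0)) => //; apply: (sgD (fiber_sg fH0)).
    exact: D_Om_diff DZ pZZ Zs.
  have -> : pt (setadd X Y) + (k1 + k2) =
     (pt (setadd X Y) - (pt X + pt Y)) + ((pt X + k1) + (pt Y + k2)).
    by rewrite [(pt X + k1) + _]addrACA [RHS]addrA subrK.
  by apply: (sgD sH); [apply: (fiberRH fH) | apply: (sgD sH)].
- move=> X nDX; apply/seteqP; split => // k [].
  by [].
Qed.

Lemma hom_coset f X : Hom f -> D X -> exists2 c, K c & f X = coset L c.
Proof. by case=> h _ DX; case: (h X DX) => c Kc <-; exists c. Qed.

Lemma hom_K f X k : Hom f -> D X -> f X k -> K k.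
Proof. by move=> hf DX; have [c Kc ->] := hom_coset hf DX; apply: cosetL_K. Qed.

Lemma hom_diff f X k k' : Hom f -> D X -> f X k -> f X k' -> L (k - k').
Proof. by move=> hf DX; have [c Kc ->] := hom_coset hf DX; apply: coset_diff. Qed.

Lemma hom_Om f : Hom f -> f Om = L.
Proof.
move=> hf; have [c Kc e] := hom_coset hf D_Om.
have eOm : setadd Om Om = Om by rewrite -(coset0 sOm) setadd_coset // addr0.
have := (proj1 (proj2 hf)) _ _ D_Om D_Om; rewrite eOm e setadd_coset //.
move=> /(coset_eqP sL); rewrite opprD addrA subrr add0r => /(sgN sL); rewrite opprK => Lc.
by rewrite -[RHS](coset0 sL); apply: coset_eq => //; rewrite subr0.
Qed.

Lemma theta_X f X k x : Hom f -> D X -> f X k -> R (x - (pt X + k)) -> X x.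
Proof.
move=> hf DX fk Rx; have [_ pX] := pt_spec DX.
have -> : x = pt X + (k + (x - (pt X + k))) by rewrite addrA subrKC.
apply: D_addOm => //; apply: (sgD sOm); last exact: ROm.
exact: KOm (hom_K hf DX fk).
Qed.

Lemma theta_in f X x : Hom f -> D X -> X x ->
  (Theta f x <-> exists2 k, f X k & R (x - (pt X + k))).
Proof.
move=> hf DX Xx; split; last by move=> [k fk Rk]; exists X; split => //; exists k.
case=> X' [DX' [k fk Rk]]; have X'x := theta_X hf DX' fk Rk.
have [_ e] := D_mem DX Xx; have [_ e'] := D_mem DX' X'x.
by rewrite e -e'; exists k.
Qed.

Lemma theta_S f x : Hom f -> Theta f x -> S x.
Proof. by move=> hf [X [DX [k fk Rk]]]; case: (D_mem DX (theta_X hf DX fk Rk)). Qed.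

Lemma theta_sg f : Hom f -> is_subgroup (Theta f).
Proof.
move=> hf; have sH0 := fiber_sg fH0; split.
  exists Om; split; first exact: D_Om.
  exists 0; first by rewrite hom_Om //; apply: sg0.
  rewrite addr0 sub0r; apply: (sgN sR); apply: pt_R; first exact: D_Om.
  by case: (pt_spec D_Om).
move=> x y [X [DX [k1 f1 R1]]] [Y [DY [k2 f2 R2]]].
have Xx := theta_X hf DX f1 R1; have Yy := theta_X hf DY f2 R2.
have [Sx eX] := D_mem DX Xx; have [Sy eY] := D_mem DY Yy.
have DZ : D (coset Om (x - y)) by apply: D_coset; apply: (sgB sS).
set Z := coset Om (x - y) in DZ *.
have eZY : setadd Z Y = X by rewrite eY setadd_coset // subrK.
have := (proj1 (proj2 hf)) _ _ DZ DY; rewrite eZY => efX.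
move: f1; rewrite efX => -[kz fz [ky fy ek]].
have Lk := hom_diff hf DY fy f2.
have [pXH pXX] := pt_spec DX; have [pYH pYY] := pt_spec DY; have [pZH pZZ] := pt_spec DZ.
have Rp : R (pt X - pt Y - pt Z).
  apply: (fiberR fH0); first by apply: (sgB sH0) => //; apply: (sgB sH0).
  have Zxy : Z (x - y) by apply: coset_self.
  have := sgB sOm (sgB sOm (D_Om_diff DX pXX Xx) (D_Om_diff DY pYY Yy)) (D_Om_diff DZ pZZ Zxy).
  suff -> : pt X - x - (pt Y - y) - (pt Z - (x - y)) = pt X - pt Y - pt Z by [].
  abel.
exists Z; split => //; exists kz => //.
have -> : x - y - (pt Z + kz) =
  (x - (pt X + k1)) - (y - (pt Y + k2)) + ((pt X - pt Y - pt Z) + (ky - k2)).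
  by rewrite -ek; abel.
apply: (sgD sR); first exact: (sgB sR).
by apply: (sgD sR) => //; case: Lk.
Qed.

Lemma theta_Om f : Hom f -> Theta f `&` Om = R.
Proof.
move=> hf; have eOm : Om = coset Om 0 by rewrite coset0.
have pR : R (pt Om) by apply: pt_R; [exact: D_Om | case: (pt_spec D_Om)].
apply/seteqP; split.
  move=> x [tx Ox]; have X0 : Om x by [].
  move/(theta_in hf D_Om X0): tx => -[k]; rewrite hom_Om // => -[_ Rk] Rx.
  have -> : x = (x - (pt Om + k)) + (pt Om + k) by rewrite subrK.
  by apply: (sgD sR) => //; apply: (sgD sR).
move=> x Rx; split; last exact: ROm.
apply/(theta_in hf D_Om (ROm Rx)); exists 0; first by rewrite hom_Om //; apply: sg0.
by rewrite addr0; apply: (sgB sR).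
Qed.

Lemma theta_sum f : Hom f -> setadd (Theta f) K = M.
Proof.
move=> hf; have sH0 := fiber_sg fH0; apply/seteqP; split.
  move=> _ [x [X [DX [k fk Rk]]] [k' Kk' <-]]; apply: (sgD sM) => //; last exact: KM.
  have [pH _] := pt_spec DX.
  have -> : x = (x - (pt X + k)) + pt X + k by abel.
  apply: (sgD sM); last exact: KM (hom_K hf DX fk).
  apply: (sgD sM); last exact: fiberM fH0 pH.
  exact: fiberM fH0 (fiberRH fH0 Rk).
move=> m Mm; have DX : D (coset Om m) by apply: D_coset; apply: S_M.
set X := coset Om m in DX *.
have [pH pX] := pt_spec DX.
move: (Mm); rewrite -(fiber_sum fH0) => -[h Hh [k' Kk' ehm]].
have Xh : X h by rewrite /X -ehm; apply/(cosetP _ _ sOm); rewrite opprD addrA subrr add0r;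
  apply: (sgN sOm); apply: KOm.
have [c Kc efX] := hom_coset hf DX.
have fc : f X c by rewrite efX; apply: coset_self.
exists (h + c).
  exists X; split => //; exists c => //.
  have -> : h + c - (pt X + c) = h - pt X by abel.
  apply: (fiberR fH0); first exact: (sgB sH0).
  exact: D_Om_diff DX Xh pX.
exists (k' - c); first exact: (sgB sK).
by rewrite -ehm; abel.
Qed.

Lemma theta_psi H : fiber K Om R M H -> Theta (Psi H) = H.
Proof.
move=> fH; have sH := fiber_sg fH; have hf := Psi_Hom fH; apply/seteqP; split.
  move=> x [X [DX [k [_ [Kk Hk]] Rx]]].
  have -> : x = (x - (pt X + k)) + (pt X + k) by rewrite subrK.
  by apply: (sgD sH) => //; apply: (fiberRH fH).
move=> x Hx; have DX : D (coset Om x) by apply: D_coset; apply: S_M; apply: fiberM fH Hx.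
have [k0 Kk0 Hk0] := psi_ex fH DX.
have [_ pX] := pt_spec DX.
exists (coset Om x); split => //; exists k0; first by split => //; split.
apply: (fiberR fH); first exact: (sgB sH).
apply: D_Om_diff DX (coset_self _ sOm) _; apply: D_addOm => //; [apply: D_coset; apply: S_M; exact: fiberM fH Hx | exact: (KOm Kk0)].
Qed.

Lemma psi_theta f : Hom f -> Theta f = Theta f -> Psi (Theta f) = f.
Proof.
move=> hf _; apply: funext => X; case: (pselect (D X)) => DX; last first.
  rewrite (proj2 (proj2 hf) X DX); apply/seteqP; split => // k [].
  by [].
have [_ pX] := pt_spec DX.
apply/seteqP; split.
  move=> k [_ [Kk tk]].
  have Xk : X (pt X + k) by apply: D_addOm => //; exact: KOm.
  move/(theta_in hf DX Xk): tk => -[k' fk' Rk].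
  have [c Kc efX] := hom_coset hf DX.
  have Kk' := hom_K hf DX fk'.
  move: fk'; rewrite efX => /(cosetP _ _ sL) [Kd Rd]; apply/(cosetP _ _ sL).
  have -> : k - c = (pt X + k - (pt X + k')) + (k' - c) by abel.
  split; last exact: (sgD sR).
  apply: (sgD sK) => //.
  have -> : pt X + k - (pt X + k') = k - k' by abel.
  exact: (sgB sK).
move=> k fk; split => //; split; first exact: hom_K hf DX fk.
apply/(theta_in hf DX); first by apply: D_addOm => //; apply: KOm; apply: hom_K hf DX fk.
by exists k => //; rewrite subrr; apply: sg0.
Qed.

Hypothesis cK : compact K.
Hypothesis oOm : open Om.
Hypothesis clR : closed R.

Lemma psi_cont V : pointwise_open M Om K R V ->
  exists U, chabauty_open U /\ fiber K Om R M `&` Psi @^-1` V = fiber K Om R M `&` U.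
Proof.
apply: cont_gen; first exact: gen_open_top.
move=> _ [d [U [Dd [[UQ [V0 [oV0 eV]]] ->]]]].
have keyU k : K k -> (U (coset L k) <-> V0 k).
  move=> Kk; have e1 : (K `&` V0) k <-> (K k /\ U (coset L k)) by rewrite -eV.
  split=> h; first by case: (e1.2 (conj Kk h)).
  by case: (e1.1 (conj Kk h)).
set C := (fun k => k + pt d) @` (K `&` ~` V0).
exists [set F | F `&` C = set0]; split.
  apply: gen_open_sub; left; exists C; split => //.
  apply: continuous_compact; first by apply: continuous_subspaceT; apply: trans_cont.
  by apply: compact_closedI => //; apply: open_closedC.
apply/seteqP; split => H [fH h]; split => //=.
  have [k0 Kk0 Hk0] := psi_ex fH Dd.
  move: h; rewrite /= (psi_coset_of fH Dd Kk0 Hk0) => /(keyU _ Kk0) V0k0.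
  apply/seteqP; split => // y [Hy [k [Kk nV] ey]]; apply: nV.
  have Pk : Psi H d k by split => //; split => //; rewrite addrC ey.
  move: Pk; rewrite (psi_coset_of fH Dd Kk0 Hk0) => /(coset_of_mem sL) e.
  by apply/(keyU _ Kk); rewrite -e; apply/(keyU _ Kk0).
have [k0 Kk0 Hk0] := psi_ex fH Dd.
rewrite (psi_coset_of fH Dd Kk0 Hk0); apply/(keyU _ Kk0).
apply: contrapT => nV.
have : (H `&` C) (k0 + pt d) by split; [rewrite addrC | exists k0].
by rewrite h.
Qed.


Let oS : open S. Proof. exact: open_setadd_sg. Qed.
Let clS : closed S. Proof. exact: open_sg_closed. Qed.

Lemma theta_closed f : Hom f -> closed (Theta f).
Proof.
move=> hf; rewrite -openC; apply: open_local => y nTy.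
case: (pselect (S y)) => Sy; last first.
  exists (~` S); split; first by rewrite openC.
  by split => // z nSz tz; apply: nSz; apply: theta_S hf tz.
have DX : D (coset Om y) by apply: D_coset.
set X := coset Om y in DX *.
have [c Kc efX] := hom_coset hf DX.
have fc : f X c by rewrite efX; apply: coset_self.
exists (X `&` [set z | (~` R) (z + - (pt X + c))]); split.
  apply: openI; first exact: open_coset.
  by apply: open_trans; rewrite openC.
split.
  split; first exact: coset_self.
  move=> Ry; apply: nTy; apply/(theta_in hf DX (coset_self _ sOm)).
  by exists c.
move=> z [Xz nRz] tz; apply: nRz.
move/(theta_in hf DX Xz): tz => -[k fk Rk].
have [_ Rd] := hom_diff hf DX fk fc.
have -> : z + - (pt X + c) = (z - (pt X + k)) + (k - c) by abel.
exact: (sgD sR).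
Qed.

Lemma theta_fiber f : Hom f -> fiber K Om R M (Theta f).
Proof.
move=> hf; split; first by split; [exact: theta_sg | exact: theta_closed].
by split; [exact: theta_Om | rewrite theta_sum].
Qed.

Lemma quot_open_trans (N : set G) (a : G) : open N ->
  quot_open K L [set q | quot K L q /\ exists2 k, q k & N (k + a)].
Proof.
move=> oN; split; first by move=> q [].
exists [set y | exists2 l, L l & N (y + (l + a))]; split.
  have -> : [set y | exists2 l, L l & N (y + (l + a))] =
     \bigcup_(l in L) [set y | N (y + (l + a))] by [].
  by apply: bigcup_open => l _; apply: open_trans.
apply/seteqP; split.
  move=> k1 [Kk1 [_ [k' ck' Nk']]]; split => //.
  exists (k' - k1); first by move/(cosetP _ _ sL): ck'.
  by rewrite addrA subrKC.
move=> k1 [Kk1 [l Ll Ny]]; split => //; split; first by exists k1.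
by exists (k1 + l); [exists l | rewrite -addrA].
Qed.

Lemma theta_cont W : chabauty_open W ->
  exists V, pointwise_open M Om K R V /\ Hom `&` Theta @^-1` W = Hom `&` V.
Proof.
apply: cont_gen; first exact: gen_open_top.
move=> _ [[C [cC ->]] | [U [oU ->]]]; apply: local_open; (try exact: gen_open_top).
  move=> f0 hf0 eC.
  pose Fl := [set P : set (set G -> set G) | exists U, pointwise_open M Om K R U /\ U f0 /\
                forall g, U g -> Hom g -> P g].
  have FF : Filter Fl.
    have tP := gen_open_top [set W | exists d U, quot (setadd M Om) Om d /\
                       quot_open K (K `&` R) U /\ W = [set f | U (f d)]].
    constructor.
    - by exists setT; split; [exact: top_setT | split].
    - move=> P Q [U1 [oU1 [U1f h1]]] [U2 [oU2 [U2f h2]]]; exists (U1 `&` U2); split.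
        by case: tP => _ [hI _]; apply: hI.
      by split => // g [? ?] hg; split; [apply: h1 | apply: h2].
    - by move=> P Q PQ [U1 [oU1 [U1f h1]]]; exists U1; split => //; split => // g ? ?; apply: PQ; apply: h1.
  have := (compact_near_coveringP C).1 cC _ Fl (fun g c => Hom g -> ~ Theta g c) FF.
  case.
    move=> c Cc; rewrite /prop_near2.
    case: (pselect (S c)) => Sc; last first.
      exists (~` S, setT) => /=.
        split; last exact: filterT.
        by apply: open_nbhs_nbhs; split => //; rewrite openC.
      by move=> [c' g] [/= nSc' _] hg tg; apply: nSc'; apply: theta_S hg tg.
    have DX : D (coset Om c) by apply: D_coset.
    set X := coset Om c in DX *.
    have [c0 Kc0 ef0X] := hom_coset hf0 DX.
    have fc0 : f0 X c0 by rewrite ef0X; apply: coset_self.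
    have nR : ~ R (c - (pt X + c0)).
      move=> Rc; have : (Theta f0 `&` C) c.
        by split => //; exists X; split => //; exists c0.
      by rewrite eC.
    pose phi := fun p : G * G => (p.1 - p.2) + - pt X.
    have phic : continuous phi.
      move=> p; apply: (@continuous_comp _ _ _ (fun p : G * G => p.1 - p.2) (fun x => x + - pt X)).
        exact: sub_continuous.
      exact: trans_cont.
    have nbR : nbhs (phi (c, c0)) (~` R).
      apply: open_nbhs_nbhs; split; first by rewrite openC.
      by rewrite /phi /=; have -> : c - c0 + - pt X = c - (pt X + c0) by abel.
    have := phic (c, c0) _ nbR.
    case=> -[A1 N] [/= nA1 nN] sAN.
    move: nN; rewrite nbhsE => -[N' [oN' N'c0] N'N].
    pose Uq := [set q | quot K L q /\ exists2 k, q k & N' (k + 0)].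
    exists (A1 `&` X, [set g | Hom g -> Uq (g X)]) => /=.
      split.
        apply: filterI => //; apply: open_nbhs_nbhs; split; first exact: open_coset.
        exact: coset_self.
      exists [set g | Uq (g X)]; split.
        apply: gen_open_sub; exists X, Uq; split => //; split => //.
        apply: quot_open_trans; exact: oN'.
      split; last by move=> g Ug _.
      split; first exact: (proj1 hf0) X DX.
      by exists c0 => //; rewrite addr0.
    move=> [c' g] [[A1c' Xc'] Bg] /= hg tg.
    move/(theta_in hg DX Xc'): tg => -[k gk Rk].
    have [_ [k1 gk1 Nk1]] := Bg hg; rewrite addr0 in Nk1.
    have [_ Rd] := hom_diff hg DX gk gk1.
    have := sAN (c', k1) (conj A1c' (N'N _ Nk1)); apply.
    rewrite /phi /=; have -> : c' - k1 + - pt X = (c' - (pt X + k)) + (k - k1) by abel.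
    exact: (sgD sR).
  move=> U [oU [Uf0 hU]]; exists U; split => //; split => // g hg Ug.
  apply/seteqP; split => // x [tx Cx].
  by have := hU g Ug hg x Cx hg tx.
move=> f0 hf0 [x [[X [DX [k fk Rk]]] Ux]].
set r := x - (pt X + k) in Rk.
set Uq := [set q | quot K L q /\ exists2 k', q k' & U (k' + (pt X + r))].
exists [set g | Uq (g X)]; split; [|split].
- by apply: gen_open_sub; exists X, Uq; split => //; split => //; apply: quot_open_trans.
- split; first exact: (proj1 hf0) X DX.
  by exists k => //; rewrite /r; have -> : k + (pt X + (x - (pt X + k))) = x by abel.
- move=> g hg [qg [k' gk' Uk']]; exists (k' + (pt X + r)); split => //.
  exists X; split => //; exists k' => //.
  by have -> : k' + (pt X + r) - (pt X + k') = r by abel.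
Qed.

End Main.

Unset Implicit Arguments.
Set Strict Implicit.

Theorem proposition5p1 (G : topologicalZmodType)
  (HG : hausdorff_space G) (LC : locally_compact [set: G])
  (K Om R M : set G) :
  is_subgroup K -> compact K ->
  is_subgroup Om -> open Om -> K `<=` Om ->
  is_subgroup R -> R `<=` Om -> (exists C : set G, closed C /\ R = C `&` Om) ->
  closed_subgroup M -> K `<=` M ->
  fiber K Om R M = set0 \/
  homeomorphic_sub (@chabauty_open G) (fiber K Om R M)
                   (pointwise_open M Om K R) (Hom_quot M Om K R).
Proof.
move=> sK cK sOm oOm KOm sR ROm [C [clC eR]] [sM clM] KM.
have clR : closed R by rewrite eR; apply: closedI => //; exact: open_sg_closed.
case: (pselect (exists H, fiber K Om R M H)) => [[H0 fH0]|nH]; last first.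
  by left; apply/seteqP; split => // H fH; apply: nH; exists H.
right.
exists (Psi K Om M H0), (Theta Om R M H0).
split; first by move=> H fH; exact: (Psi_Hom sK sOm KOm sR sM KM fH0 fH).
split; first by move=> f hf; exact: (theta_fiber sK sOm KOm sR ROm sM KM fH0 oOm clR hf).
split; first by move=> H fH; exact: (theta_psi sK sOm KOm sR sM KM fH0 fH).
split; first by move=> f hf; exact: (psi_theta sK sOm KOm sR ROm sM KM fH0 hf (erefl _)).
split; first exact: (psi_cont sK sOm KOm sR sM KM fH0 cK).
exact: (theta_cont sK sOm KOm sR ROm sM KM fH0 oOm clR).
Qed.
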